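(* Let $\Phi=(V,Q,\mathcal{C})$ be a CSP formula with atomic constraints and $h=(h_v)_{v\in V}$ a projection scheme satisfying the entropy criterion with parameters $0<\beta<\alpha<1$. Let $D$ be the maximum degree of the dependency graph of $\Phi$ and $q_v=|Q_v|$, $s_v=|\Sigma_v|$. Suppose that for every $c\in\mathcal{C}$, $\sum_{v\in\mathrm{vbl}(c)}\log q_v\ge\frac1\beta\log(40\mathrm{e}D^2)$. Then for any variable $u\in V$, any $\tau\in\bigotimes_{v\in V\setminus\{u\}}\Sigma_v$ and any $y\in\Sigma_u$, $$\nu_u^{\tau}(y)\le\frac{1}{q_u}\Big\lceil\frac{q_u}{s_u}\Big\rceil\exp\Big(\frac1{20D}\Big).$$
   Context: A CSP formula: variables $V$ with finite domains $Q_v$ ($|Q_v|\ge2$), constraints $c$ on $\mathrm{vbl}(c)\subseteq V$; atomic means violated by exactly one configuration of its variables. Dependency graph: vertices $\mathcal{C}$, adjacency iff variable sets intersect. $\mu$: uniform distribution over satisfying assignments. Projection scheme: $h_v:Q_v\to\Sigma_v$. Entropy criterion with $(\alpha,\beta)$: $\lfloor q_v/s_v\rfloor\le|h_v^{-1}(y)|\le\lceil q_v/s_v\rceil$ for all $v,y$; and for each $c$: $\sum_{v\in\mathrm{vbl}(c)}\log\lceil q_v/s_v\rceil\le\alpha\sum_{v\in\mathrm{vbl}(c)}\log q_v$, $\sum_{v\in\mathrm{vbl}(c)}\log\lfloor q_v/s_v\rfloor\ge\beta\sum_{v\in\mathrm{vbl}(c)}\log q_v$. $\nu$ is the distribution of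 $(h_v(X_v))_v$ for $X\sim\mu$, and $\nu_u^\tau$ denotes the marginal distribution at $u$ of $\nu$ conditioned on the values at $V\setminus\{u\}$ being $\tau$. $\log$ is base 2. *)

(* Defs.v *)
From mathcomp Require Import all_boot all_order all_algebra.
From mathcomp Require Import all_classical all_reals all_analysis.
Set Implicit Arguments. Unset Strict Implicit. Unset Printing Implicit Defensive.
Import Order.TTheory GRing.Theory Num.Theory.
Local Open Scope ring_scope.

Definition log2 {R : realType} (x : R) : R := ln x / ln 2.

Definition ceildiv (q s : nat) : nat := (q %/ s + ~~ (s %| q))%N.

Section CSP.
Variables (V : finType) (q s : V -> nat) (C : finType).

Definition assignment := {dffun forall v : V, 'I_(q v)}.
Definition proj_assignment := {dffun forall v : V, 'I_(s v)}.

(* An atomic constraint c is given by its variable set vbl c and the unique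
   configuration forb c (restricted to vbl c) violating it. *)
Variables (vbl : C -> {set V}) (forb : C -> assignment).

Definition violates (c : C) (x : assignment) : bool :=
  [forall v in vbl c, x v == forb c v].

Definition satisfies (x : assignment) : bool := [forall c, ~~ violates c x].

Definition dep_degree (c : C) : nat :=
  #|[set c' | (c' != c) && ~~ [disjoint vbl c & vbl c']]|.

Definition max_degree : nat := (\max_(c : C) dep_degree c)%N.

Variable h : forall v : V, 'I_(q v) -> 'I_(s v).

(* entropy criterion with parameters (alpha, beta).
   The side condition 0 < floor(q_v/s_v) for v in vbl c encodes the convention
   log 0 = -oo (ln 0 = 0 in the library). *)
Definition entropy_criterion {R : realType} (alpha beta : R) : Prop :=
  (forall v (y : 'I_(s v)),
      (q v %/ s v <= #|[set x : 'I_(q v) | h x == y]| <= ceildiv (q v) (s v))%N)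
  /\ (forall c : C,
      \sum_(v in vbl c) log2 (ceildiv (q v) (s v))%:R
        <= alpha * \sum_(v in vbl c) log2 ((q v)%:R : R))
  /\ (forall c : C,
      (forall v, v \in vbl c -> 0 < q v %/ s v)%N /\
      \sum_(v in vbl c) log2 (q v %/ s v)%:R
        >= beta * \sum_(v in vbl c) log2 ((q v)%:R : R)).

Definition agrees_off (u : V) (tau : proj_assignment) (x : assignment) : bool :=
  [forall v, (v != u) ==> (h (x v) == tau v)].

Definition nu_cond {R : realType} (u : V) (tau : proj_assignment) (y : 'I_(s u)) : R :=
  (#|[set x : assignment | satisfies x && agrees_off u tau x && (h (x u) == y)]|%:R)
  / (#|[set x : assignment | satisfies x && agrees_off u tau x]|%:R).

End CSP.

(* Main.v *)
Require Import Defs.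
From mathcomp Require Import all_boot all_order all_algebra.
From mathcomp Require Import all_classical all_reals all_analysis.
From mathcomp Require Import lra ring.
Import Order.TTheory GRing.Theory Num.Theory.
Set Implicit Arguments. Unset Strict Implicit. Unset Printing Implicit Defensive.

Section Comb.
Variables (V : finType) (q s : V -> nat) (C : finType).
Variables (vbl : C -> {set V}) (forb : C -> assignment q).
Variable h : forall v : V, 'I_(q v) -> 'I_(s v).
Variables (u : V) (tau : proj_assignment s).
Local Notation A := (assignment q).

Definition Fp (v : V) : pred 'I_(q v) := fun a => (v != u) ==> (h a == tau v).
Definition Om : {set A} := [set x : A | agrees_off h u tau x].

Lemma card_fam (F : forall v, pred 'I_(q v)) :
  #|(family F : simpl_pred A)| = (\prod_v #|F v|)%N.
Proof. by rewrite card_family foldrE big_map big_enum. Qed.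

Lemma inOm x : (x \in Om) = (x \in (family Fp : simpl_pred A)).
Proof.
rewrite inE /agrees_off; apply/forallP/familyP => H v; exact: H.
Qed.

Definition merge (T : {set V}) (x z : A) : A :=
  @finfun V (fun v => 'I_(q v)) (fun v => if v \in T then x v else z v).

Lemma mergeE T x z v : merge T x z v = if v \in T then x v else z v.
Proof. by rewrite /merge ffunE. Qed.

Lemma merge_Om T x z : x \in Om -> z \in Om -> merge T x z \in Om.
Proof.
rewrite !inE /agrees_off => /forallP Hx /forallP Hz; apply/forallP => v.
by rewrite mergeE; case: (v \in T); [apply: Hx | apply: Hz].
Qed.

Lemma merge_ag T x z : agrees_off h u tau x -> agrees_off h u tau z ->
  agrees_off h u tau (merge T x z).
Proof. by move=> Hx Hz; have := @merge_Om T x z; rewrite !inE; apply. Qed.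

Lemma swap_card (T : {set V}) (E G : pred A) :
  (forall x z : A, (forall v, v \in T -> x v = z v) -> E x = E z) ->
  (forall x z : A, (forall v, v \notin T -> x v = z v) -> G x = G z) ->
  (#|[set x in Om | E x && G x]| * #|Om| =
   #|[set x in Om | E x]| * #|[set x in Om | G x]|)%N.
Proof.
move=> HE HG; rewrite [in RHS]mulnC -!cardsX.
pose sg (p : A * A) := (merge T p.2 p.1, merge T p.1 p.2).
have sgK : involutive sg.
  move=> [x z]; rewrite /sg /=; congr (_, _); apply/ffunP => v;
  by rewrite !mergeE; case: (v \in T).
have key : forall x z : A, E x -> G x -> agrees_off h u tau x -> agrees_off h u tau z ->
   [/\ E (merge T x z), G (merge T z x), agrees_off h u tau (merge T x z) & agrees_off h u tau (merge T z x)].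
  move=> x z Ex Gx xO zO; split; last 2 first.
  - exact: merge_ag. - exact: merge_ag.
  - by rewrite (HE _ x) // => v vT; rewrite mergeE vT.
  - by rewrite (HG _ x) // => v vT; rewrite mergeE (negbTE vT).
apply/eqP; rewrite eqn_leq; apply/andP; split.
- rewrite -(card_imset _ (inv_inj sgK)); apply: subset_leq_card.
  apply/fintype.subsetP => _ /imsetP[[x z] + ->]; rewrite !inE /= => /andP[/andP[xO /andP[Ex Gx]] zO].
  by have [E1 G1 O1 O2] := key x z Ex Gx xO zO; rewrite E1 G1 O1 O2.
- rewrite -(card_imset _ (inv_inj sgK)); apply: subset_leq_card.
  apply/fintype.subsetP => _ /imsetP[[x z] + ->]; rewrite !inE /= => /andP[/andP[xO Gx] /andP[zO Ez]].
  have E1 : E (merge T z x) by rewrite (HE _ z) // => v vT; rewrite mergeE vT.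
  have G1 : G (merge T z x) by rewrite (HG _ x) // => v vT; rewrite mergeE (negbTE vT).
  by rewrite E1 G1 !merge_ag.
Qed.


Definition viol c (x : A) := violates vbl forb c x.
Definition avoid (S : {set C}) (x : A) := [forall b in S, ~~ viol b x].
Definition NN (S : {set C}) := #|[set x in Om | avoid S x]|.
Definition Vc c (S : {set C}) := #|[set x in Om | viol c x && avoid S x]|.

Lemma avoid_dep (S : {set V} ) (S2 : {set C}) (x z : A) :
  (forall b, b \in S2 -> [disjoint S & vbl b]) ->
  (forall v, v \notin S -> x v = z v) -> avoid S2 x = avoid S2 z.
Proof.
move=> Hd Hxz; apply: eq_forallb_in => b bS; congr negb.
apply: eq_forallb_in => v vb; rewrite Hxz //.
by rewrite (disjointFl (Hd b bS) vb).
Qed.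

Lemma indep (T : {set V}) (E : pred A) (S2 : {set C}) :
  (forall x z : A, (forall v, v \in T -> x v = z v) -> E x = E z) ->
  (forall b, b \in S2 -> [disjoint T & vbl b]) ->
  (#|[set x in Om | E x && avoid S2 x]| * #|Om| =
   #|[set x in Om | E x]| * NN S2)%N.
Proof.
move=> HE Hd; apply: (swap_card (T := T)) => // x z Hxz.
exact: avoid_dep Hd Hxz.
Qed.

Lemma viol_dep c (x z : A) : (forall v, v \in vbl c -> x v = z v) -> viol c x = viol c z.
Proof. by move=> H; apply: eq_forallb_in => v vb; rewrite H. Qed.

Lemma union_bd (S1 S2 : {set C}) : (NN S2 <= NN (S1 :|: S2) + \sum_(b in S1) Vc b S2)%N.
Proof.
have H : forall r : seq C,
  (NN S2 <= #|[set x in Om | avoid S2 x && all (fun b => ~~ viol b x) r]|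
            + \sum_(b <- r) Vc b S2)%N.
  elim=> [|b r IH].
    rewrite big_nil addn0; apply: subset_leq_card; apply/fintype.subsetP => x.
    by rewrite !inE andbT.
  rewrite big_cons (leq_trans IH) // addnA leq_add2r.
  apply: leq_trans (leq_card_setU _ _); apply: subset_leq_card.
  apply/fintype.subsetP => x; rewrite !inE /=.
  by case: (agrees_off h u tau x); case: (avoid S2 x); case: (viol b x); case: (all _ r).
have := H (enum S1); rewrite big_enum /=; congr (_ <= _ + _)%N.
apply: eq_card => x; rewrite !inE; congr (_ && _).
apply/andP/forallP => [[H1 /allP H2] b | H1].
  apply/implyP; rewrite inE => /orP[bS1|bS2].
  - by apply: H2; rewrite mem_enum.
  - by move/forallP: H1 => /(_ b) /implyP; apply.
split; first by apply/forallP => b; apply/implyP => bS; have /implyP := H1 b; apply; rewrite inE bS orbT.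
by apply/allP => b; rewrite mem_enum => bS; have /implyP := H1 b; apply; rewrite inE bS.
Qed.

Definition upd (x : A) (a : 'I_(q u)) : A :=
  @finfun V (fun v => 'I_(q v))
    (fun v => insubd (x v) (if v == u then val a else val (x v))).

Lemma upd_u x a : upd x a u = a.
Proof. by apply: val_inj; rewrite /upd ffunE val_insubd eqxx ltn_ord. Qed.

Lemma upd_v x a v : v != u -> upd x a v = x v.
Proof. by move=> vu; apply: val_inj; rewrite /upd ffunE val_insubd (negbTE vu) ltn_ord. Qed.

Definition Kf (a : 'I_(q u)) := #|[set x in Om | x u == a]|.

Lemma Kf_le a a' : Kf a <= Kf a'.
Proof.
rewrite /Kf -(@card_in_imset _ _ (upd^~ a')).
  apply: subset_leq_card; apply/fintype.subsetP => _ /imsetP[x + ->].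
  rewrite !inE upd_u eqxx andbT => /andP[/forallP H _].
  apply/forallP => v; apply/implyP => vu; rewrite upd_v //.
  by have /implyP := H v; apply.
move=> x z; rewrite !inE => /andP[_ /eqP xa] /andP[_ /eqP za] e.
apply/ffunP => v; case: (eqVneq v u) => [->|vu]; first by rewrite xa za.
by rewrite -(upd_v x a' vu) e upd_v.
Qed.

Lemma Kf_eq a a' : Kf a = Kf a'.
Proof. by apply/eqP; rewrite eqn_leq !Kf_le. Qed.

Lemma card_Qu (Q : pred 'I_(q u)) :
  #|[set x in Om | Q (x u)]| = \sum_(a | Q a) Kf a.
Proof.
rewrite -sum1_card (partition_big (fun x : A => x u) Q) /=; last first.
  by move=> x; rewrite !inE => /andP[].
apply: eq_bigr => a Qa; rewrite /Kf -sum1_card; apply: eq_bigl => x.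
rewrite !inE; case: (eqVneq (x u) a) => [->|]; rewrite ?Qa ?andbT ?andbF //.
Qed.

Lemma fiber_bd (a0 : 'I_(q u)) (y : 'I_(s u)) :
  #|[set x in Om | h (x u) == y]| * q u = #|[set a | h a == y]| * #|Om|.
Proof.
have E1 (P : pred 'I_(q u)) : \sum_(a | P a) Kf a = #|[set a | P a]| * Kf a0.
  by rewrite -sum_nat_const; apply: eq_big => [a|a _]; [rewrite inE | exact: Kf_eq].
have -> : #|Om| = #|[set x in Om | predT (x u)]|.
  by apply: eq_card => x; rewrite !inE andbT.
rewrite !card_Qu !E1.
have -> : #|[set a : 'I_(q u) | predT a]| = q u.
  by rewrite -[RHS]card_ord; apply: eq_card => a; rewrite inE.
by rewrite (card_Qu (fun a => h a == y)) E1 mulnAC mulnA.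
Qed.

Lemma Fp_card v : (v != u -> q v %/ s v <= #|[set a : 'I_(q v) | h a == tau v]|) -> q v %/ s v <= #|@Fp v|.
Proof.
case: (eqVneq v u) => [->|vu] H.
  apply: leq_trans (leq_div _ _) _; rewrite -[X in X <= _]card_ord.
  by apply: subset_leq_card; apply/fintype.subsetP => a _; rewrite /in_mem /= /Fp eqxx.
apply: (leq_trans (H isT)); apply: subset_leq_card; apply/fintype.subsetP => a.
by rewrite inE /in_mem /= /Fp vu.
Qed.

Lemma viol_bd c :
  (forall v, v \in vbl c -> v != u -> q v %/ s v <= #|[set a : 'I_(q v) | h a == tau v]|) ->
  #|[set x in Om | viol c x]| * \prod_(v in vbl c) (q v %/ s v) <= #|Om|.
Proof.
move=> hfl.
pose F' := fun v => [pred a : 'I_(q v) | @Fp v a && ((v \in vbl c) ==> (a == forb c v))].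
have e1 : #|[set x in Om | viol c x]| = #|(family F' : simpl_pred A)|.
  apply: eq_card => x; rewrite inE inOm; apply/andP/familyP => [[/familyP H1 /forallP H2] v | H].
    rewrite /F' inE /=; have := H1 v; rewrite /in_mem /= => ->.
    exact: H2 v.
  split.
    by apply/familyP => v; have := H v; rewrite /F' inE /= /in_mem /= => /andP[].
  by apply/forallP => v; have := H v; rewrite /F' inE /= => /andP[].
have e2 : #|Om| = #|(family Fp : simpl_pred A)| by apply: eq_card => x; rewrite inOm.
rewrite e1 e2 !card_fam [\prod_(v in vbl c) _]big_mkcond -big_split /=; apply: leq_prod => v _.
have sub : #|F' v| <= #|@Fp v|.
  by apply: subset_leq_card; apply/fintype.subsetP => a; rewrite /in_mem /= /F' /= => /andP[].
case vc: (v \in vbl c); last first.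
  rewrite muln1; apply: subset_leq_card; apply/fintype.subsetP => a.
  by rewrite unfold_in /= unfold_in /= => /andP[].
apply: leq_trans (_ : 1 * (q v %/ s v) <= _).
  rewrite leq_mul2r; apply/orP; right.
  rewrite -(card1 (forb c v)); apply: subset_leq_card; apply/fintype.subsetP => a.
  by rewrite unfold_in /= unfold_in /= => /andP[_ /eqP ->].
rewrite mul1n; apply: Fp_card => vu; exact: hfl.
Qed.

Local Open Scope ring_scope.
Definition nbs (c : C) := [set b | (b != c) && ~~ [disjoint vbl c & vbl b]].

Lemma lll (R : realType) (P x0 : R) (D : nat) :
  (0 < #|Om|)%N ->
  (forall c, (#|[set x in Om | viol c x]|%:R <= P * (#|Om|%:R) :> R)%R) ->
  (forall c, (#|nbs c| <= D)%N) ->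
  (0 <= P)%R -> (0 <= x0)%R -> (0 < 1 - D%:R * x0)%R -> (P <= x0 * (1 - D%:R * x0))%R ->
  forall (S : {set C}),
  (forall S' : {set C}, (#|S'| < #|S|)%N -> forall c, c \notin S' ->
    ((Vc c S')%:R <= x0 * (NN S')%:R :> R)%R) ->
  forall c, c \notin S ->
    ((Vc c S)%:R <= x0 * (NN S)%:R :> R)%R.
Proof.
move=> hOm hP hdeg hP0 hx0 hD hPx S IH c cS.
set S1 := S :&: nbs c; set S2 := S :\: nbs c.
have S12 : S1 :|: S2 = S by rewrite setID.
have disj : forall b, b \in S2 -> [disjoint vbl c & vbl b].
  move=> b; rewrite !inE => /andP[+ bS]; move=> /nandP[/negPn/eqP eb | /negPn //].
  by rewrite -eb bS in cS.
have h1 : (Vc c S <= Vc c S2)%N.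
  apply: subset_leq_card; apply/fintype.subsetP => x; rewrite !inE.
  case: (agrees_off h u tau x) (viol c x) => //= [] [] //= /forallP H.
  apply/forallP => b; apply/implyP; rewrite inE => /andP[_ bS].
  by have /implyP := H b; apply.
have h2 : ((Vc c S2)%:R <= P * (NN S2)%:R :> R)%R.
  have := indep (T := vbl c) (E := viol c) (@viol_dep c) disj.
  move/(congr1 (fun n : nat => n%:R : R)); rewrite !natrM => e.
  have Om0 : (0 < (#|Om|)%:R :> R)%R by rewrite ltr0n.
  rewrite -(ler_pM2r Om0) e mulrAC ler_wpM2r //.
have h3 := union_bd S1 S2; rewrite S12 in h3.
have h4 : (\sum_(b in S1) (Vc b S2)%:R <= (#|S1|)%:R * (x0 * (NN S2)%:R) :> R)%R.
  rewrite -sum1_card natr_sum mulr_suml; apply: ler_sum => b bS1.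
  rewrite mul1r; apply: IH.
    rewrite -(cardsID (nbs c) S) -/S1 -/S2 -[X in (X < _)%N]add0n ltn_add2r.
    by rewrite card_gt0; apply/set0Pn; exists b.
  by move: bS1; rewrite !inE => /andP[_ ->].
have h5 : (#|S1| <= D)%N.
  apply: leq_trans (hdeg c); apply: subset_leq_card; apply/fintype.subsetP => b.
  by rewrite inE => /andP[].
have h3' : ((NN S2)%:R <= (NN S)%:R + D%:R * x0 * (NN S2)%:R :> R)%R.
  apply: le_trans (_ : _ <= (NN S)%:R + \sum_(b in S1) (Vc b S2)%:R)%R _.
    by rewrite -natr_sum -natrD ler_nat.
  rewrite lerD2l (le_trans h4) // -mulrA ler_wpM2r // ?mulr_ge0 ?ler0n //.
  by rewrite ler_nat.
have h1' : ((Vc c S)%:R <= (Vc c S2)%:R :> R)%R by rewrite ler_nat.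
set a := (Vc c S)%:R : R in h1' *; set b := (Vc c S2)%:R : R in h1' h2.
set n2 := (NN S2)%:R : R in h2 h3'; set nS := (NN S)%:R : R in h3' *.
set d := D%:R : R in h3' hD hPx.
have n20 : (0 <= n2)%R by rewrite ler0n.
have nS0 : (0 <= nS)%R by rewrite ler0n.
have k1 : (n2 * (1 - d * x0) <= nS)%R by nra.
have k2 : (a <= P * n2)%R by apply: le_trans h1' h2.
set t := (1 - d * x0)%R in hD hPx k1 *.
have k3 : (a * t <= P * nS)%R.
  apply: le_trans (_ : _ <= P * n2 * t)%R _; first by rewrite ler_pM2r.
  by rewrite -mulrA; apply: ler_wpM2l.
have k4 : (P * nS <= x0 * nS * t)%R.
  by rewrite mulrAC; apply: ler_wpM2r.
by rewrite -(ler_pM2r hD) (le_trans k3 k4).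
Qed.

End Comb.

Local Open Scope ring_scope.

Lemma ln_prod_nat (R : realType) (I : finType) (P : pred I) (F : I -> nat) :
  (forall i, P i -> (0 < F i)%N) ->
  \sum_(i | P i) ln ((F i)%:R : R) = ln ((\prod_(i | P i) F i)%:R).
Proof.
move=> HF.
suff [] : (0 < \prod_(i | P i) F i)%N /\
  \sum_(i | P i) ln ((F i)%:R : R) = ln ((\prod_(i | P i) F i)%:R) by [].
apply: (big_rec2 (fun a b => (0 < b)%N /\ a = ln (b%:R : R))).
  by rewrite ln1.
move=> i a b Pi [b0 ->]; split; first by rewrite muln_gt0 HF.
rewrite natrM lnM // posrE ltr0n //; exact: HF.
Qed.

Lemma K_le (R : realType) (I : finType) (P : pred I) (fl qq : I -> nat) (beta K : R) :
  0 < beta -> 0 < K ->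
  (forall i, P i -> (0 < fl i)%N) ->
  \sum_(i | P i) log2 ((fl i)%:R : R) >= beta * \sum_(i | P i) log2 ((qq i)%:R : R) ->
  \sum_(i | P i) log2 ((qq i)%:R : R) >= beta^-1 * log2 K ->
  K <= (\prod_(i | P i) fl i)%:R.
Proof.
move=> hb hK hfl h1 h2.
have h3 : log2 K <= \sum_(i | P i) log2 ((fl i)%:R : R).
  apply: le_trans h1.
  have -> : log2 K = beta * (beta^-1 * log2 K) by rewrite mulrA mulfV ?gt_eqF // mul1r.
  apply: ler_wpM2l; [exact: ltW | exact: h2].
have ln2 : 0 < ln (2 : R) by rewrite ln_gt0 // ltr1n.
move: h3; rewrite /log2 -mulr_suml ler_pM2r ?invr_gt0 // ln_prod_nat //.
by rewrite ler_ln // posrE ltr0n prodn_cond_gt0.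
Qed.

Lemma numeric (R : realType) (d P : R) : 1 <= d -> 0 < P -> d ^+ 2 * P <= 80^-1 ->
  [/\ 0 < 1 - d * (4/3 * P), P <= (4/3 * P) * (1 - d * (4/3 * P)) &
   forall g, 0 <= g <= 2 * d -> 0 < 1 - g * (4/3 * P) /\
       1 <= (1 - g * (4/3 * P)) * expR ((20 * d)^-1)].
Proof.
move=> d1 P0 dP.
have d0 : 0 < d by apply: lt_le_trans d1; exact: ltr01.
set a := (20 * d)^-1.
have a0 : 0 < a by rewrite invr_gt0 mulr_gt0 // ltr0n.
have ad : a * (20 * d) = 1 by rewrite mulVf // gt_eqF // mulr_gt0 // ltr0n.
have a1 : 20 * a <= 1 by nra.
have w0 : 0 <= d * P by nra.
have w1 : 4 * (d * P) <= a.
  have : (d * P) * (20 * d) <= 4^-1 by rewrite expr2 in dP; nra.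
  nra.
have w2 : d * P <= 80^-1 by nra.
split.
- nra.
- nra.
move=> g /andP[g0 g2d].
have t1 : g * (4/3 * P) <= 2/3 * a by nra.
have ea : 1 + a <= expR a by exact: expR_ge1Dx.
split; first by nra.
nra.
Qed.

Unset Implicit Arguments.
Theorem lemma7p7 (R : realType) (V : finType) (q s : V -> nat) (C : finType)
  (vbl : C -> {set V}) (forb : C -> assignment q)
  (h : forall v : V, 'I_(q v) -> 'I_(s v)) (alpha beta : R) :
  (forall v, 2 <= q v)%N ->
  0 < beta -> beta < alpha -> alpha < 1 ->
  entropy_criterion vbl h alpha beta ->
  (0 < max_degree vbl)%N ->
  (forall c : C,
     \sum_(v in vbl c) log2 ((q v)%:R : R) >=
       beta^-1 * log2 (40 * expR 1 * ((max_degree vbl)%:R) ^+ 2)) ->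
  forall (u : V) (tau : proj_assignment s) (y : 'I_(s u)),
    (0 < #|[set x : assignment q | satisfies vbl forb x && agrees_off h u tau x]|)%N ->
    nu_cond vbl forb h (R:=R) (u:=u) tau y <=
      ((q u)%:R)^-1 * (ceildiv (q u) (s u))%:R * expR ((20 * (max_degree vbl)%:R)^-1).
Proof.
move=> hq hb hba ha1 [hfib [hent1 hent2]] hD0 hlog u tau y hpos.
set D := max_degree vbl in hD0 hlog *.
pose K : R := 40 * expR 1 * D%:R ^+ 2.
pose P := K^-1.
have d1 : 1 <= D%:R :> R by rewrite ler1n.
have e2 : 2 <= expR 1 :> R by have := expR_ge1Dx (1:R); lra.
have K0 : 0 < K by rewrite /K !mulr_gt0 ?exprn_gt0 //; lra.
have P0 : 0 < P by rewrite invr_gt0.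
have dP : D%:R ^+ 2 * P <= 80^-1.
  have e1 : D%:R ^+ 2 * P * (40 * expR 1) = 1.
    by rewrite /P /K; field; rewrite !gt_eqF //; lra.
  nra.
have [hA hB hC] := numeric d1 P0 dP.
set x0 := 4 / 3 * P in hA hB hC.
have x00 : 0 <= x0 by rewrite /x0 mulr_ge0 // ?ltW //.
have hOm : (0 < #|Om h u tau|)%N.
  apply: leq_trans hpos _; apply: subset_leq_card; apply/fintype.subsetP => x.
  by rewrite !inE => /andP[].
have hdeg c : (#|nbs vbl c| <= D)%N by exact: (@leq_bigmax C (dep_degree vbl) c).
have hP c : (#|[set x in Om h u tau | viol vbl forb c x]|%:R <= P * #|Om h u tau|%:R :> R).
  have hv := @viol_bd _ _ _ _ vbl forb h u tau c (fun v _ _ => (andP (hfib v (tau v))).1).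
  have [hfl hs] := hent2 c.
  have hK := @K_le R V (fun v => v \in vbl c) (fun v => (q v %/ s v)%N) q beta K hb K0 hfl hs (hlog c).
  rewrite /P mulrC ler_pdivlMr //.
  apply: le_trans (_ : _ <= (#|[set x in Om h u tau | viol vbl forb c x]|
                              * \prod_(v in vbl c) (q v %/ s v))%N%:R) _.
    by rewrite natrM; apply: ler_wpM2l => //; rewrite ler0n.
  by rewrite ler_nat.
have LLL : forall n (S : {set C}), (#|S| <= n)%N -> forall c, c \notin S ->
    ((Vc vbl forb h u tau c S)%:R <= x0 * (NN vbl forb h u tau S)%:R :> R).
  elim=> [|n IH] S hS c cS; apply: (lll hOm hP hdeg (ltW P0) x00 hA hB) => // S' hS'.
    by move: (leq_trans hS' hS).
  by apply: IH; rewrite -ltnS (leq_trans hS' hS).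
pose G := [set c | u \in vbl c].
pose S2 := ~: G.
pose E := fun x : assignment q => h u (x u) == y.
pose m := #|[set x in Om h u tau | E x && avoid vbl forb S2 x]|.
pose num := #|[set x : assignment q | satisfies vbl forb x && agrees_off h u tau x && (h u (x u) == y)]|.
pose den := #|[set x : assignment q | satisfies vbl forb x && agrees_off h u tau x]|.
have -> : nu_cond vbl forb h tau y = num%:R / den%:R :> R by [].
have num_le : (num <= m)%N.
  apply: subset_leq_card; apply/fintype.subsetP => x; rewrite !inE /E.
  case/andP => /andP[/forallP sat ag] ->; rewrite ag /=.
  by apply/forallP => b; apply/implyP => _; exact: sat.
have den_eq : den = NN vbl forb h u tau (G :|: S2).
  rewrite /S2 finset.setUCr; apply: eq_card => x; rewrite !inE andbC; congr (_ && _).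
  by apply/forallP/forallP => H b; [apply/implyP => _; apply: H | have /implyP := H b; apply].
have ind : (m * #|Om h u tau| = #|[set x in Om h u tau | E x]| * NN vbl forb h u tau S2)%N.
  apply: (@indep _ _ _ _ _ forb h u tau [set u]).
    by move=> x z Hxz; rewrite /E Hxz // inE.
  by move=> b; rewrite !inE disjoints1.
have a0 : 'I_(q u) := Ordinal (ltnW (hq u)).
have fb := fiber_bd h tau a0 y.
have mq : (m * q u <= ceildiv (q u) (s u) * NN vbl forb h u tau S2)%N.
  rewrite -(leq_pmul2r hOm) mulnAC ind mulnAC fb.
  rewrite mulnAC leq_mul2r; apply/orP; right.
  by rewrite leq_mul2r (andP (hfib u y)).2 orbT.
have gD : (#|G| <= D.+1)%N.
  case: (set_0Vmem G) => [->|[c0 c0G]]; first by rewrite cards0.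
  apply: leq_trans (_ : #|c0 |: nbs vbl c0| <= _)%N.
    apply: subset_leq_card; apply/fintype.subsetP => b bG; rewrite !inE.
    have uc0 : u \in vbl c0 by move: c0G; rewrite inE.
    case: (eqVneq b c0) => //= bc0; apply/negP => /disjointFr/(_ uc0) H.
    by rewrite inE H in bG.
  by rewrite cardsU1 -add1n leq_add ?leq_b1 ?hdeg.
have un := union_bd vbl forb h u tau G S2.
set N2 := NN vbl forb h u tau S2 in ind mq un.
rewrite -den_eq in un.
have un' : (N2%:R <= den%:R + #|G|%:R * x0 * N2%:R :> R).
  apply: le_trans (_ : _ <= den%:R + \sum_(b in G) (Vc vbl forb h u tau b S2)%:R) _.
    by rewrite -natr_sum -natrD ler_nat.
  rewrite lerD2l -mulrA -sum1_card natr_sum mulr_suml; apply: ler_sum => b bG.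
  rewrite mul1r; apply: (LLL _ _ (leqnn _)).
  by rewrite inE negbK.
have [t0 t1] : 0 < 1 - #|G|%:R * x0 /\ 1 <= (1 - #|G|%:R * x0) * expR ((20 * D%:R)^-1).
  apply: hC; rewrite ler0n /=.
  apply: le_trans (_ : (D.+1)%:R <= _); first by rewrite ler_nat.
  rewrite -addn1 natrD; lra.
have den0 : 0 < den%:R :> R by rewrite ltr0n.
have q0 : 0 < (q u)%:R :> R by rewrite ltr0n (leq_trans _ (hq u)).
have num_le' : (num%:R <= m%:R :> R) by rewrite ler_nat.
have mq' : m%:R * (q u)%:R <= (ceildiv (q u) (s u))%:R * N2%:R :> R.
  by rewrite -!natrM ler_nat.
set ee := expR _ in t1 *.
set cc := (ceildiv _ _)%:R in mq' *.
set t := 1 - _ in t0 t1 un'.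
have ee0 : 0 < ee by rewrite /ee expR_gt0.
have N20 : 0 <= N2%:R :> R by rewrite ler0n.
have k1 : N2%:R * t <= den%:R by rewrite /t; nra.
have k2 : N2%:R <= den%:R * ee.
  apply: le_trans (_ : N2%:R * (t * ee) <= _); first by rewrite -{1}[N2%:R]mulr1 ler_wpM2l.
  by rewrite mulrA ler_wpM2r // ltW.
rewrite ler_pdivrMr //.
have g2 : num%:R * (q u)%:R <= cc * (den%:R * ee).
  apply: le_trans (_ : m%:R * (q u)%:R <= _); first by rewrite ler_wpM2r // ltW.
  by apply: (le_trans mq'); rewrite ler_wpM2l // /cc ler0n.
have -> : (q u)%:R^-1 * cc * ee * den%:R = (cc * (den%:R * ee)) / (q u)%:R.
  by field; rewrite gt_eqF.
by rewrite ler_pdivlMr.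
Qed.
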